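(* Let $\alpha=\ln2/\ln3$ and let $(p_k/q_k)_{k\ge0}$ be the convergents of its simple continued fraction expansion $\alpha=[0;1,1,1,2,2,3,1,5,\ldots]$, indexed so that $p_0/q_0=0/1$, $p_1/q_1=1/1$, $p_2/q_2=1/2$, $p_3/q_3=2/3$, $p_4/q_4=5/8,\ldots$. Then for every odd $k>1$, $$\left|\sum_{i=1}^{p_k}\frac{2^{\lfloor (i-1)/\alpha\rfloor}}{3^i}-\frac{p_k}{6\ln2}\right|<\frac16.$$
   Context: The sum $\sum_{i=1}^{p_k}2^{\lfloor (i-1)/\alpha\rfloor}/3^i$ equals $-\Phi_{\mathbb{R}}(w_k)$, where $w_k$ is the Christoffel word $(\lceil(j+1)p_k/q_k\rceil-\lceil jp_k/q_k\rceil)_{j=0}^{q_k-1}$ (of length $q_k$ and height $p_k$) and $\Phi_{\mathbb{R}}(w)=-\sum_i 2^{d_i}/3^{i+1}$ over the positions $d_i$ of the $1$'s of $w$. *)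

(* Defs.v *)
From Stdlib Require Import Reals ZArith Arith.
Open Scope R_scope.

Definition alpha : R := ln 2 / ln 3.

Fixpoint cf_rest (x : R) (n : nat) : R :=
  match n with
  | O => x
  | S m => / frac_part (cf_rest x m)
  end.

Definition cf_digit (x : R) (n : nat) : Z := Int_part (cf_rest x n).

(* ((p_n, q_n), (p_{n-1}, q_{n-1})), with p_{-1} = 1, q_{-1} = 0,
   p_0 = a_0, q_0 = 1, p_n = a_n p_{n-1} + p_{n-2}, same for q. *)
Fixpoint cf_pq (x : R) (n : nat) : (Z * Z) * (Z * Z) :=
  match n with
  | O => ((cf_digit x 0, 1%Z), (1%Z, 0%Z))
  | S m =>
      let '((p, q), (p', q')) := cf_pq x m in
      let a := cf_digit x (S m) in
      (((a * p + p')%Z, (a * q + q')%Z), (p, q))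
  end.

Definition conv_p (x : R) (k : nat) : Z := fst (fst (cf_pq x k)).
Definition conv_q (x : R) (k : nat) : Z := snd (fst (cf_pq x k)).

Fixpoint sum1 (n : nat) (f : nat -> R) : R :=
  match n with
  | O => 0
  | S m => sum1 m f + f (S m)
  end.

(* Main.v *)
Require Import Defs.
From Stdlib Require Import Reals ZArith Arith.
From Stdlib Require Import Lia Lra List Permutation.
Open Scope R_scope.

Lemma ln2_pos : 0 < ln 2.
Proof. pose proof ln_lt_2; lra. Qed.
Lemma ln23 : ln 2 < ln 3.
Proof. apply ln_increasing; lra. Qed.

Lemma no_pow (N M : nat) : N <> 0%nat -> INR N * ln 2 <> INR M * ln 3.
Proof.
  intros HN H.
  rewrite <- !ln_pow in H by lra.
  apply ln_inv in H; try (apply pow_lt; lra).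
  assert (H2 : INR (2 ^ N) = INR (3 ^ M)).
  { rewrite !pow_INR. replace (INR 2) with 2 by (simpl; lra). replace (INR 3) with 3 by (simpl; lra). exact H. }
  apply INR_eq in H2.
  assert (Nat.odd (2^N) = Nat.odd (3^M)) by now rewrite H2.
  rewrite Nat.odd_pow in H0 by auto.
  destruct M as [|M].
  - simpl in H0. discriminate.
  - rewrite Nat.odd_pow in H0 by lia. discriminate.
Qed.

Lemma alpha_irr (n m : Z) : n <> 0%Z -> alpha * IZR n <> IZR m.
Proof.
  intros Hn H. unfold alpha in H.
  pose proof ln2_pos. pose proof ln23.
  assert (E : IZR n * ln 2 = IZR m * ln 3).
  { rewrite <- H. field. lra. }
  destruct (Z_lt_le_dec 0 n) as [Hp|Hp].
  - assert (0 < IZR m).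
    { apply (Rmult_lt_reg_r (ln 3)); [lra|]. rewrite <- E. rewrite Rmult_0_l.
      apply Rmult_lt_0_compat; auto. now apply IZR_lt. }
    apply lt_IZR in H2.
    apply (no_pow (Z.to_nat n) (Z.to_nat m)); [lia|].
    rewrite !INR_IZR_INZ, !Z2Nat.id by lia. exact E.
  - assert (IZR m < 0).
    { apply (Rmult_lt_reg_r (ln 3)); [lra|]. rewrite <- E. rewrite Rmult_0_l.
      assert (IZR n < 0) by (apply IZR_lt; lia). nra. }
    apply lt_IZR in H2.
    apply (no_pow (Z.to_nat (-n)) (Z.to_nat (-m))); [lia|].
    rewrite !INR_IZR_INZ, !Z2Nat.id by lia. rewrite !opp_IZR. lra.
Qed.

Lemma Int_part_eq (x : R) (z : Z) : IZR z <= x < IZR z + 1 -> Int_part x = z.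
Proof.
  intros [H1 H2]. unfold Int_part.
  rewrite <- (tech_up x (z+1)); [lia| rewrite plus_IZR; lra | rewrite plus_IZR; lra].
Qed.

Lemma alpha_bounds : 0 < alpha < 1.
Proof.
  pose proof ln2_pos. pose proof ln23. unfold alpha. split.
  - apply Rdiv_lt_0_compat; lra.
  - apply (Rmult_lt_reg_r (ln 3)); [lra|]. field_simplify; lra.
Qed.

Definition J (n : nat) : Prop :=
  let '((p, q), (p', q')) := cf_pq alpha n in
  let x := cf_rest alpha (S n) in
  1 < x /\ (1 <= q)%Z /\ (0 <= q')%Z /\
  alpha * (IZR q * x + IZR q') = IZR p * x + IZR p' /\
  (p * q' - p' * q = if Nat.even n then -1 else 1)%Z.

Lemma frac_nz (x : R) : (forall z, x <> IZR z) -> 0 < frac_part x < 1.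
Proof.
  intros H. destruct (base_fp x) as [H1 H2]. split; [|lra].
  destruct H1 as [H1|H1]; [lra|]. exfalso. apply (H (Int_part x)).
  unfold frac_part in H1. lra.
Qed.

Lemma J0 : J 0.
Proof.
  pose proof alpha_bounds as [a0 a1].
  unfold J. simpl. unfold cf_digit. simpl.
  assert (Hi : Int_part alpha = 0%Z) by (apply Int_part_eq; simpl; lra).
  rewrite Hi. unfold frac_part. rewrite Hi.
  replace (alpha - IZR 0) with alpha by (simpl; ring).
  repeat split; try lia.
  - rewrite <- Rinv_1. apply Rinv_lt_contravar; lra.
  - simpl. field. lra.
Qed.

Lemma J_step n : J n -> J (S n).
Proof.
  unfold J. simpl cf_pq. destruct (cf_pq alpha n) as [[p q] [p' q']].
  intros [Hx [Hq [Hq' [Hrel Hdet]]]].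
  set (x1 := cf_rest alpha (S n)) in *.
  change (cf_rest alpha (S (S n))) with (/ frac_part x1).
  unfold cf_digit. fold x1.
  set (a := Int_part x1).
  assert (Hnz : forall z, x1 <> IZR z).
  { intros z Hz. rewrite Hz in Hrel.
    apply (alpha_irr (q * z + q') (p * z + p')).
    - assert (0 < IZR z) by lra. apply lt_IZR in H. nia.
    - rewrite !plus_IZR, !mult_IZR. lra. }
  pose proof (frac_nz x1 Hnz) as [f0 f1].
  assert (Ha : (1 <= a)%Z).
  { destruct (base_Int_part x1). unfold a. 
    assert (0 < IZR (Int_part x1)) by (unfold frac_part in f1; lra).
    apply lt_IZR in H1. lia. }
  assert (Hx1 : x1 = IZR a + frac_part x1) by (unfold frac_part, a; ring).
  set (f := frac_part x1) in *. clearbody f a x1.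
  repeat split.
  - rewrite <- Rinv_1. apply Rinv_lt_contravar; lra.
  - nia.
  - lia.
  - rewrite !plus_IZR, !mult_IZR.
    replace (alpha * ((IZR a * IZR q + IZR q') * / f + IZR q))
      with (/ f * (alpha * (IZR q * x1 + IZR q'))) by (rewrite Hx1; field; lra).
    rewrite Hrel, Hx1. field. lra.
  - rewrite Nat.even_succ, <- Nat.negb_even.
    destruct (Nat.even n); simpl; lia.
Qed.

Lemma J_all n : J n.
Proof. induction n; [apply J0 | now apply J_step]. Qed.

Lemma exp_pow_nat (a : R) (n : nat) : exp a ^ n = exp (INR n * a).
Proof.
  induction n; simpl. - rewrite Rmult_0_l, exp_0; ring.
  - rewrite IHn, <- exp_plus. f_equal. destruct n; simpl; ring.
Qed.

Lemma term_bounds (p q : Z) (e : R) :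
  (1 <= p)%Z -> (1 <= q)%Z -> e = IZR p - IZR q * alpha -> 0 < e ->
  (IZR p - 1) * e < alpha ->
  forall j, (j < Z.to_nat p)%nat ->
  let P := Z.to_nat p in let r := ((j * Z.to_nat q) mod P)%nat in
  let c := exp (- (ln 2 / INR P)) in
  c ^ (S r) / 3 < powerRZ 2 (Int_part (INR j / alpha)) / 3 ^ (S j) <= c ^ r / 3.
Proof.
  intros Hp Hq He He0 Hpe j Hj P r c.
  pose proof alpha_bounds as [a0 a1]. pose proof ln2_pos. pose proof ln23.
  set (m := ((j * Z.to_nat q) / P)%nat).
  assert (HP : INR P = IZR p) by (unfold P; rewrite INR_IZR_INZ, Z2Nat.id by lia; reflexivity).
  assert (HQ : INR (Z.to_nat q) = IZR q) by (rewrite INR_IZR_INZ, Z2Nat.id by lia; reflexivity).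
  assert (HP0 : 0 < INR P) by (rewrite HP; apply IZR_lt; lia).
  assert (Hdm : INR j * IZR q = INR P * INR m + INR r).
  { rewrite <- HQ, <- mult_INR, <- mult_INR, <- plus_INR. f_equal.
    apply Nat.div_mod_eq. }
  assert (Hr : (r < P)%nat) by (apply Nat.mod_upper_bound; lia).
  assert (Hr2 : INR r + 1 <= INR P) by (rewrite <- S_INR; apply le_INR; lia). clear Hr.
  set (w := (INR r + INR j * e / alpha) / INR P).
  assert (Hsplit : INR j / alpha = INR m + w).
  { unfold w. rewrite He. replace (INR r) with (INR j * IZR q - INR P * INR m) by lra.
    rewrite HP. field. split; lra. }
  assert (Hje : INR j * e < alpha).
  { assert (Hj2 : INR j + 1 <= INR P) by (rewrite <- S_INR; apply le_INR; lia).
    apply Rle_lt_trans with ((IZR p - 1) * e); auto. apply Rmult_le_compat_r; [lra|]. rewrite <- HP; lra. }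
  assert (Hj0 : 0 <= INR j) by apply pos_INR.
  assert (Hjea : 0 <= INR j * e / alpha < 1).
  { split. - apply Rmult_le_pos; [nra| left; apply Rinv_0_lt_compat; lra].
    - apply (Rmult_lt_reg_r alpha); [lra|]. field_simplify; lra. }
  assert (Hw1 : INR r / INR P <= w).
  { unfold w. apply Rmult_le_compat_r; [left; apply Rinv_0_lt_compat; lra| lra]. }
  assert (Hw2 : w < (INR r + 1) / INR P).
  { unfold w. apply Rmult_lt_compat_r; [apply Rinv_0_lt_compat; lra| lra]. }
  assert (Hw3 : 0 <= w < 1).
  { split. - apply Rle_trans with (INR r / INR P); auto.
      apply Rmult_le_pos; [apply pos_INR | left; apply Rinv_0_lt_compat; lra].
    - apply Rlt_le_trans with ((INR r + 1) / INR P); auto.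
      apply (Rmult_le_reg_r (INR P)); [lra|]. field_simplify; lra. }
  assert (Hint : Int_part (INR j / alpha) = Z.of_nat m).
  { apply Int_part_eq. rewrite <- INR_IZR_INZ. lra. }
  rewrite Hint, <- pow_powerRZ.
  assert (Hterm : 2 ^ m / 3 ^ S j = exp (- (w * ln 2)) / 3).
  { rewrite <- (exp_ln (2 ^ m)) by (apply pow_lt; lra).
    rewrite ln_pow by lra.
    replace (INR m) with (INR j / alpha - w) by lra.
    simpl pow. rewrite <- (exp_ln (3 ^ j)) by (apply pow_lt; lra).
    rewrite ln_pow by lra.
    replace ((INR j / alpha - w) * ln 2) with (INR j * ln 3 + - (w * ln 2))
      by (unfold alpha; field; lra).
    rewrite exp_plus. field. pose proof (exp_pos (INR j * ln 3)). lra. }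
  rewrite Hterm. unfold c. rewrite !exp_pow_nat. rewrite S_INR.
  split.
  - apply Rmult_lt_compat_r; [lra|]. apply exp_increasing.
    apply Rle_lt_trans with (- ((INR r + 1) / INR P * ln 2)).
    + right. field. lra.
    + apply Ropp_lt_contravar. apply Rmult_lt_compat_r; auto.
  - apply Rmult_le_compat_r; [lra|].
    assert (- (w * ln 2) <= INR r * - (ln 2 / INR P)).
    { apply Rle_trans with (- (INR r / INR P * ln 2)).
      + apply Ropp_le_contravar. apply Rmult_le_compat_r; lra.
      + right. field. lra. }
    destruct H1 as [H1|H1]; [left; now apply exp_increasing | rewrite H1; lra].
Qed.

Definition lsum (l : list nat) (f : nat -> R) : R :=
  fold_right (fun j acc => f j + acc) 0 l.

Lemma lsum_app l1 l2 f : lsum (l1 ++ l2) f = lsum l1 f + lsum l2 f.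
Proof. induction l1; simpl; [ring| rewrite IHl1; ring]. Qed.

Lemma sum1_lsum n f : sum1 n f = lsum (seq 0 n) (fun j => f (S j)).
Proof.
  induction n; [reflexivity|]. simpl sum1. rewrite seq_S, lsum_app, IHn. simpl. ring.
Qed.

Lemma lsum_map l g f : lsum (map g l) f = lsum l (fun j => f (g j)).
Proof. induction l; simpl; congruence. Qed.

Lemma lsum_perm l l' f : Permutation l l' -> lsum l f = lsum l' f.
Proof. induction 1; simpl; try lra. Qed.

Lemma lsum_le l f g : (forall j, In j l -> f j <= g j) -> lsum l f <= lsum l g.
Proof.
  induction l; simpl; intros H; [lra|].
  apply Rplus_le_compat; auto.
Qed.

Lemma lsum_lt l f g : l <> nil -> (forall j, In j l -> f j < g j) -> lsum l f < lsum l g.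
Proof.
  induction l; simpl; intros Hn H; [congruence|].
  destruct l as [|b l].
  - simpl. specialize (H a (or_introl eq_refl)). lra.
  - apply Rplus_lt_compat; auto. apply IHl; [discriminate| auto].
Qed.

Lemma lsum_scal l c f : lsum l (fun j => c * f j) = c * lsum l f.
Proof. induction l; simpl; [ring| rewrite IHl; ring]. Qed.

Lemma lsum_ext l f g : (forall j, In j l -> f j = g j) -> lsum l f = lsum l g.
Proof. induction l; simpl; intros H; [reflexivity|]. rewrite H, IHl; auto. Qed.

Lemma geom c n : lsum (seq 0 n) (fun r => c ^ r) * (1 - c) = 1 - c ^ n.
Proof.
  induction n; [simpl; ring|]. rewrite seq_S, lsum_app.
  rewrite Rmult_plus_distr_r, IHn. simpl. ring.
Qed.

Lemma inj_mod (p q p' q' : Z) (P Q : nat) :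
  p = Z.of_nat P -> q = Z.of_nat Q -> (p * q' - p' * q = 1)%Z ->
  forall j1 j2, (j1 < P)%nat -> (j2 < P)%nat ->
  ((j1 * Q) mod P = (j2 * Q) mod P)%nat -> j1 = j2.
Proof.
  intros -> -> Hd j1 j2 H1 H2 Hm.
  pose proof (Nat.div_mod_eq (j1 * Q) P) as E1.
  pose proof (Nat.div_mod_eq (j2 * Q) P) as E2.
  rewrite Hm in E1.
  set (m1 := ((j1 * Q) / P)%nat) in *. set (m2 := ((j2 * Q) / P)%nat) in *.
  set (r := ((j2 * Q) mod P)%nat) in *. clearbody m1 m2 r.
  apply (f_equal Z.of_nat) in E1, E2.
  rewrite Nat2Z.inj_add, !Nat2Z.inj_mul in E1, E2.
  set (z1 := Z.of_nat j1) in *. set (z2 := Z.of_nat j2) in *.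
  set (zP := Z.of_nat P) in *. set (zQ := Z.of_nat Q) in *.
  assert (Hz : (z1 - z2 = zP * ((z1 - z2) * q' - p' * (Z.of_nat m1 - Z.of_nat m2)))%Z).
  { transitivity ((z1 - z2) * (zP * q' - p' * zQ))%Z; [rewrite Hd; ring|].
    transitivity (zP * (z1 - z2) * q' - p' * (z1 * zQ - z2 * zQ))%Z; [ring|].
    rewrite E1, E2. ring. }
  assert (z1 < zP)%Z by (unfold z1, zP; lia). assert (z2 < zP)%Z by (unfold z2, zP; lia).
  assert (0 <= z1)%Z by (unfold z1; lia). assert (0 <= z2)%Z by (unfold z2; lia).
  set (t := ((z1 - z2) * q' - p' * (Z.of_nat m1 - Z.of_nat m2))%Z) in *.
  clearbody t.
  assert (z1 = z2).
  { destruct (Z.lt_trichotomy t 0) as [Ht|[Ht|Ht]].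
    - assert (zP * t <= - zP)%Z by nia. lia.
    - subst t. lia.
    - assert (zP <= zP * t)%Z by nia. lia. }
  unfold z1, z2 in *. lia.
Qed.

Lemma div_lt_aux a b k : 0 < b -> a < b * k -> a / b < k.
Proof.
  intros Hb H. apply (Rmult_lt_reg_r b); auto. unfold Rdiv.
  rewrite Rmult_assoc, Rinv_l by lra. lra.
Qed.

Theorem lemma49 (k : nat) (hk1 : (1 < k)%nat) (hkodd : Nat.odd k = true) :
  Rabs (sum1 (Z.to_nat (conv_p alpha k))
          (fun i => powerRZ 2 (Int_part (INR (i - 1) / alpha)) / 3 ^ i)
        - IZR (conv_p alpha k) / (6 * ln 2)) < 1 / 6.
Proof.
  pose proof (J_all k) as HJ. unfold J, conv_p in *.
  destruct (cf_pq alpha k) as [[p q] [p' q']]. simpl fst.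
  set (x := cf_rest alpha (S k)) in *. clearbody x.
  destruct HJ as [Hx [Hq [Hq' [Hrel Hdet]]]].
  assert (Hev : Nat.even k = false) by (rewrite <- Nat.negb_odd, hkodd; reflexivity).
  rewrite Hev in Hdet.
  pose proof alpha_bounds as [a0 a1]. pose proof ln2_pos as Hl2. pose proof ln23.
  assert (HqR : 1 <= IZR q) by (apply IZR_le; lia).
  assert (Hq'R : 0 <= IZR q') by (apply IZR_le; lia).
  set (den := IZR q * x + IZR q').
  assert (Hden : 1 < den) by (unfold den; nra).
  set (e := IZR p - IZR q * alpha).
  assert (He : e * den = 1).
  { unfold e, den. transitivity (IZR (p * q' - p' * q)).
    - rewrite minus_IZR, !mult_IZR.
      replace ((IZR p - IZR q * alpha) * (IZR q * x + IZR q'))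
        with (IZR p * (IZR q * x + IZR q') - IZR q * (alpha * (IZR q * x + IZR q'))) by ring.
      rewrite Hrel. ring.
    - rewrite Hdet. reflexivity. }
  assert (He0 : 0 < e) by nra.
  assert (He1 : e < 1) by nra.
  assert (Hp : (1 <= p)%Z).
  { assert (0 < IZR q * alpha) by nra. assert (0 < IZR p) by (unfold e in He0; lra). apply lt_IZR in H1. lia. }
  assert (Hpe : (IZR p - 1) * e < alpha).
  { assert (IZR p - 1 < alpha * den).
    { assert (IZR p - 1 < IZR q * alpha) by (unfold e in He1; lra).
      assert (0 <= (x - 1) * IZR q) by (apply Rmult_le_pos; lra).
      assert (0 <= alpha * ((x - 1) * IZR q)) by (apply Rmult_le_pos; lra).
      assert (0 <= alpha * IZR q') by (apply Rmult_le_pos; lra).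
      unfold den. nra. }
    apply Rlt_le_trans with (alpha * den * e); [nra|]. right.
    rewrite Rmult_assoc, (Rmult_comm den), He. ring. }
  assert (Hdet1 : (p * q' - p' * q = 1)%Z) by exact Hdet.
  set (P := Z.to_nat p). set (Q := Z.to_nat q).
  assert (HPp : p = Z.of_nat P) by (unfold P; lia).
  assert (HQq : q = Z.of_nat Q) by (unfold Q; lia).
  assert (HP : INR P = IZR p) by (rewrite HPp, <- INR_IZR_INZ; reflexivity).
  assert (HP0 : 0 < INR P) by (rewrite HP; apply IZR_lt; lia).
  set (c := exp (- (ln 2 / INR P))).
  set (rr := fun j => ((j * Q) mod P)%nat).
  pose proof (term_bounds p q e Hp Hq eq_refl He0 Hpe) as TB.
  rewrite sum1_lsum.
  set (T := fun j : nat => powerRZ 2 (Int_part (INR (S j - 1) / alpha)) / 3 ^ S j).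
  assert (Hperm : Permutation (map rr (seq 0 P)) (seq 0 P)).
  { apply Permutation_map_same_l.
    - apply FinFun.Injective_map_NoDup_in; [|apply seq_NoDup].
      intros j1 j2 I1 I2. apply in_seq in I1, I2.
      apply (inj_mod p q p' q' P Q HPp HQq Hdet1); lia.
    - intros r Hr. apply in_map_iff in Hr as [j [<- Hj]]. apply in_seq in Hj.
      apply in_seq. unfold rr. split; [lia|]. simpl. apply Nat.mod_upper_bound. lia. }
  set (G := lsum (seq 0 P) (fun r => c ^ r)).
  assert (Hup : lsum (seq 0 P) T <= G / 3).
  { apply Rle_trans with (lsum (seq 0 P) (fun j => / 3 * c ^ (rr j))).
    - apply lsum_le. intros j Hj. apply in_seq in Hj.
      unfold T. replace (S j - 1)%nat with j by lia.
      destruct (TB j ltac:(fold P; lia)) as [_ H2].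
      apply Rle_trans with (c ^ rr j / 3); [exact H2| right; unfold Rdiv; ring].
    - right. rewrite lsum_scal.
      rewrite <- (lsum_map (seq 0 P) rr (fun r => c ^ r)).
      rewrite (lsum_perm _ _ _ Hperm). unfold G. field. }
  assert (Hlow : c * G / 3 < lsum (seq 0 P) T).
  { apply Rle_lt_trans with (lsum (seq 0 P) (fun j => / 3 * c ^ (S (rr j)))).
    - right. rewrite lsum_scal.
      rewrite <- (lsum_map (seq 0 P) rr (fun r => c ^ S r)).
      rewrite (lsum_perm _ _ _ Hperm). unfold G. simpl pow.
      rewrite (lsum_scal _ c (fun r => c ^ r)). field.
    - apply lsum_lt.
      + destruct P eqn:EP; [simpl in HP0; lra| simpl; discriminate].
      + intros j Hj. apply in_seq in Hj.
        unfold T. replace (S j - 1)%nat with j by lia.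
        destruct (TB j ltac:(fold P; lia)) as [H2 _].
        apply Rle_lt_trans with (c ^ S (rr j) / 3); [right; unfold Rdiv; ring| exact H2]. }
  set (u := ln 2 / INR P).
  assert (Hu : 0 < u) by (unfold u; apply Rdiv_lt_0_compat; lra).
  assert (Hc1 : c * (1 + u) < 1).
  { pose proof (exp_ineq1 u ltac:(lra)). unfold c. fold u. rewrite exp_Ropp.
    apply (Rmult_lt_reg_r (exp u)); [apply exp_pos|].
    field_simplify; [lra| apply Rgt_not_eq, exp_pos]. }
  assert (Hc2 : 1 < c + u).
  { pose proof (exp_ineq1 (- u) ltac:(lra)). unfold c. fold u. lra. }
  assert (Hc0 : 0 < c) by apply exp_pos.
  assert (HcP : c ^ P = / 2).
  { unfold c. rewrite exp_pow_nat. replace (INR P * - (ln 2 / INR P)) with (- ln 2) by (field; lra).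
    rewrite exp_Ropp, exp_ln; lra. }
  pose proof (geom c P) as Hg. fold G in Hg. rewrite HcP in Hg.
  assert (Hc3 : c < 1) by nra.
  assert (HG : G = / (2 * (1 - c))) by (apply (Rmult_eq_reg_r (1 - c)); [field_simplify; lra|]; lra).
  replace (IZR p / (6 * ln 2)) with (/ (6 * u)) by (unfold u; rewrite HP; field; split; lra).
  apply Rabs_def1.
  - apply Rle_lt_trans with (G / 3 - / (6 * u)); [lra|].
    rewrite HG.
    replace (/ (2 * (1 - c)) / 3 - / (6 * u)) with ((u - (1 - c)) / (6 * u * (1 - c)))
      by (field; split; lra).
    apply div_lt_aux; [nra|]. nra.
  - apply Rlt_le_trans with (c * G / 3 - / (6 * u)); [|lra].
    rewrite HG.
    replace (c * / (2 * (1 - c)) / 3 - / (6 * u)) with ((c * u - (1 - c)) / (6 * u * (1 - c)))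
      by (field; split; lra).
    apply Ropp_lt_cancel. rewrite Ropp_involutive.
    replace (- ((c * u - (1 - c)) / (6 * u * (1 - c)))) with (((1 - c) - c * u) / (6 * u * (1 - c)))
      by (field; split; lra).
    apply div_lt_aux; [nra|]. nra.
Qed.
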